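(* Let $n\ge1$, $K=U(n)$, $\underline{\lambda}=(\lambda_1\ge\dots\ge\lambda_{n+1})$, $\underline{\mu}=(\mu_1\ge\dots\ge\mu_n)$ with $\lambda_1\ge\mu_1\ge\lambda_2\ge\dots\ge\mu_n\ge\lambda_{n+1}$, and let $\tilde p$, $W_{(\underline{\lambda},\underline{\mu})}$, $\omega_{(\underline{\lambda},\underline{\mu})}$ and $\Psi$ be as in the context. Then for all $a,b\in T_{\tilde p}(K\cdot\tilde p)^\omega$, $$(\omega_\Lambda)_{\tilde p}(a,b)=\omega_{(\underline{\lambda},\underline{\mu})}(\Psi(a),\Psi(b));$$ that is, the symplectic form on $W_{(\underline{\lambda},\underline{\mu})}$ obtained by transporting the symplectic-slice form $\overline{\omega}_{\tilde p}$ through the isomorphism $\overline{\Psi}\colon W_{\tilde p}\to W_{(\underline{\lambda},\underline{\mu})}$ equals $\omega_{(\underline{\lambda},\underline{\mu})}$.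
   Context: Notation: for a finite real sequence $\underline{\tau}$, $[\underline{\tau}]$ is its set of distinct values, $\underline{\tau}_i$ the $i$-th largest element of $[\underline{\tau}]$, $m(\underline{\tau})=|[\underline{\tau}]|$, $n_v(\underline{\tau})$ the multiplicity of $v$. Shapes: for each value $v$ in $\underline{\lambda}$ or $\underline{\mu}$, the component labelled $v$ is an M-shape if $n_v(\underline{\mu})=n_v(\underline{\lambda})+1$, a W-shape if $n_v(\underline{\lambda})=n_v(\underline{\mu})+1$, a parallelogram-shape if $n_v(\underline{\lambda})=n_v(\underline{\mu})$. For $\mu\in[\underline{\mu}]$ with M-shape component, $r_\mu>0$ with $r_\mu^2=-\prod_{\lambda\in[\underline{\lambda}],\,\text{W}}(\mu-\lambda)\prod_{\tau\in[\underline{\mu}],\,\text{M},\,\tau\ne\mu}\frac{1}{\mu-\tau}$; otherwise $r_\mu=0$. For $\mu$ whose component is not an M-shape, $C_\mu=\sum_{i=1}^{n+1}\lambda_i-\sum_{i=1}^n\mu_i-\mu+\sum_{\tau\in[\underline{\mu}],\,\text{M}}\frac{r_\tau^2}{\mu-\tau}$ (nonzero for parallelogram-shapes). Setting: $\mathcal{O}_\Lambda$ is the set of $(n+1)\times(n+1)$ Hermitian matrices with eigenvalues $\lambda_1,\dots,\lambda_{n+1}$, with symplectic form $(\omega_\Lambda)_p([X,p],[Y,p])=\frac{1}{\sqrt{-1}}\mathrm{Tr}(p[X,Y])$, $X,Y\in\mathfrak{u}(n+1)$; $K$ acts by conjugation by $\mathrm{diag}(1,k)$. $\mathrm{M}=\mathrm{diag}(\mu_1,\dots,\mu_n)$,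 $c=\sum\lambda_i-\sum\mu_i$; for $\mu\in[\underline{\mu}]$ and $\mathbf{v}\in\mathbb{C}^n$, $\mathbf{v}_\mu\in\mathbb{C}^{n_\mu(\underline{\mu})}$ is the block of coordinates $j$ with $\mu_j=\mu$. $\tilde p=\begin{pmatrix}c&\mathbf{z}^\dagger\\ \mathbf{z}&\mathrm{M}\end{pmatrix}\in\mathcal{O}_\Lambda$ with $\mathbf{z}_\mu=(r_\mu,0,\dots,0)^T$ for each $\mu\in[\underline{\mu}]$. Elements of $T_{\tilde p}(K\cdot\tilde p)^\omega$ (the $\omega_\Lambda$-orthogonal complement of the $K$-orbit's tangent space) are Hermitian matrices $\begin{pmatrix}0&\mathbf{v}^\dagger\\ \mathbf{v}&0\end{pmatrix}$. $W_{(\underline{\lambda},\underline{\mu})}=\bigoplus_{\mu\in[\underline{\mu}],\,\text{parallelogram-shape}}\mathbb{C}^{n_\mu(\underline{\mu})}$ with $\omega_{(\underline{\lambda},\underline{\mu})}(\mathbf{u},\mathbf{w})=\frac{1}{\sqrt{-1}}\sum_{\mu\ \text{parallelogram}}\frac{-\mathbf{u}_\mu^\dagger\mathbf{w}_\mu+\mathbf{w}_\mu^\dagger\mathbf{u}_\mu}{C_\mu}$. $\Psi\colon T_{\tilde p}(K\cdot\tilde p)^\omega\to W_{(\underline{\lambda},\underline{\mu})}$ sends the matrix with lower-left block $\mathbf{v}$ to $(\mathbf{v}_\mu)_{\mu\ \text{parallelogram-shape}}$; it is surjective with kernel $T_{\tilde p}(K\cdot\tilde p)\cap T_{\tilde p}(K\cdot\tilde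 p)^\omega$, hence descends to a linear isomorphism $\overline{\Psi}$ from the symplectic slice $W_{\tilde p}=T_{\tilde p}(K\cdot\tilde p)^\omega/(T_{\tilde p}(K\cdot\tilde p)\cap T_{\tilde p}(K\cdot\tilde p)^\omega)$, whose symplectic form $\overline{\omega}_{\tilde p}$ is induced by $\omega_\Lambda$. *)

(* Defs.v *)
(* Complex numbers: an arbitrary numClosedFieldType C
   (e.g. algC or R[i] for a real closed / real field R); the real
   numbers lambda_i, mu_i are elements of C satisfying [\is Num.real]. *)
From HB Require Import structures.
From mathcomp Require Import all_boot all_order all_algebra.
Set Implicit Arguments.
Unset Strict Implicit.
Unset Printing Implicit Defensive.
Import Order.TTheory GRing.Theory Num.Theory.
Local Open Scope ring_scope.

Section Slice.
Variable C : numClosedFieldType.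
Variable n : nat.
(* lambda_1 >= ... >= lambda_{n+1} stored as lam 0, ..., lam n;
   mu_1 >= ... >= mu_n stored as mu 0, ..., mu (n-1).  Values of lam, mu
   outside these ranges are never used. *)
Variables lam mu : nat -> C.

Definition adjmx (m k : nat) (A : 'M[C]_(m, k)) : 'M[C]_(k, m) :=
  (map_mx (fun x => x^*) A)^T.

Definition skew_herm (m : nat) (X : 'M[C]_m) : Prop := adjmx X = - X.

Definition lam_vals : seq C := undup [seq lam i | i <- iota 0 n.+1].
Definition mu_vals : seq C := undup [seq mu i | i <- iota 0 n].

Definition n_lam (v : C) : nat := count (fun i => lam i == v) (iota 0 n.+1).
Definition n_mu (v : C) : nat := count (fun i => mu i == v) (iota 0 n).

Definition is_M (v : C) : bool := n_mu v == (n_lam v).+1.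
Definition is_W (v : C) : bool := n_lam v == (n_mu v).+1.
Definition is_par (v : C) : bool := n_lam v == n_mu v.

Definition r_sq (m : C) : C :=
  if is_M m then
    - ((\prod_(l <- lam_vals | is_W l) (m - l)) *
       (\prod_(t <- mu_vals | is_M t && (t != m)) (m - t)^-1))
  else 0.
Definition r_ (m : C) : C := sqrtC (r_sq m).

Definition c_ : C := \sum_(i < n.+1) lam i - \sum_(i < n) mu i.

Definition C_ (m : C) : C :=
  \sum_(i < n.+1) lam i - \sum_(i < n) mu i - m
  + \sum_(t <- mu_vals | is_M t) r_ t ^+ 2 / (m - t).

(* z : for each value mu, z_mu = (r_mu, 0, ..., 0): the coordinate j gets
   r_{mu_j} iff j is the first index in the block of mu_j *)
Definition z_ (j : nat) : C :=
  if has (fun j' => mu j' == mu j) (iota 0 j) then 0 else r_ (mu j).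

(* p~ = [[c, z^dagger], [z, M]] ; index 0 is the first row/column *)
Definition ptilde : 'M[C]_(n.+1) :=
  \matrix_(i < n.+1, j < n.+1)
    if (i == 0 :> nat) && (j == 0 :> nat) then c_
    else if (i == 0 :> nat) then (z_ j.-1)^*
    else if (j == 0 :> nat) then z_ i.-1
    else if i == j then mu i.-1 else 0.

(* KKS form at p: omega_p([X,p],[Y,p]) = (1/i) Tr(p [X,Y]) *)
Definition omegaL (p X Y : 'M[C]_(n.+1)) : C :=
  'i^-1 * \tr (p *m (X *m Y - Y *m X)).

Definition bracket (X p : 'M[C]_(n.+1)) : 'M[C]_(n.+1) := X *m p - p *m X.

(* Lie algebra of K = {diag(1,k) : k in U(n)}: the matrices diag(0, Z),
   Z in u(n) *)
Definition in_LieK (Z : 'M[C]_(n.+1)) : Prop :=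
  skew_herm Z /\ (forall j : 'I_n.+1, Z ord0 j = 0) /\
  (forall i : 'I_n.+1, Z i ord0 = 0).

(* [X,p~] lies in T_{p~}(K.p~)^omega *)
Definition in_perp (X : 'M[C]_(n.+1)) : Prop :=
  forall Z, in_LieK Z -> omegaL ptilde X Z = 0.

(* W_(lambda,mu) is represented inside C^n (coordinates indexed by j < n),
   as the vectors supported on the coordinates j with mu_j of
   parallelogram shape.  Psi keeps the lower-left block v on those
   coordinates. *)
Definition Psi (a : 'M[C]_(n.+1)) : nat -> C :=
  fun j => if is_par (mu j) then a (inord j.+1) ord0 else 0.

Definition omegaLM (u w : nat -> C) : C :=
  'i^-1 * \sum_(m <- mu_vals | is_par m)
     (\sum_(j <- iota 0 n | mu j == m)
        (- ((u j)^* * w j) + (w j)^* * u j)) / C_ m.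

End Slice.

(* Main.v *)
Set Warnings "-notation-overridden,-ambiguous-paths".
Require Import Defs.
From HB Require Import structures.
From mathcomp Require Import all_boot all_order all_algebra.
Import Order.TTheory GRing.Theory Num.Theory.
Local Open Scope ring_scope.
Set Implicit Arguments. Unset Strict Implicit. Unset Printing Implicit Defensive.
From mathcomp Require Import zify ring.
Local Open Scope ring_scope.
Set Implicit Arguments. Unset Strict Implicit. Unset Printing Implicit Defensive.

Lemma count_iota_last (P : pred nat) m :
  count P (iota 0 m.+1) = (count P (iota 0 m) + P m)%N.
Proof. by rewrite -addn1 iotaD count_cat /= addn0. Qed.

Lemma count_iota_le (P Q : pred nat) m :
  (forall i, (i < m)%N -> P i -> Q i) -> (count P (iota 0 m) <= count Q (iota 0 m))%N.
Proof.
elim: m => [|m IH] H; first by [].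
rewrite !count_iota_last.
apply: leq_add; first by apply: IH => i Hi; apply: H; apply: ltnW.
by case: (P m) (H m (ltnSn m)) => // ->.
Qed.

Lemma count_iotaS (P : pred nat) m :
  count P (iota 0 m.+1) = (P 0%N + count (fun i => P i.+1) (iota 0 m))%N.
Proof. by rewrite /= -[1%N]addn0 iotaDl count_map. Qed.

Lemma count_le_split (C : numClosedFieldType) (f : nat -> C) (v : C) (s : seq nat) :
  count (fun i => v <= f i) s = addn (count (fun i => v < f i) s) (count (fun i => f i == v) s).
Proof.
elim: s => //= a s ->.
have [->|neq] := eqVneq (f a) v; first by rewrite lexx ltxx /=; lia.
rewrite le_eqVlt eq_sym (negbTE neq) /=; case: (v < f a) => /=; lia.
Qed.

Lemma sum_group (C : numClosedFieldType) (T : eqType) (F : T -> C) (s : seq nat)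
  (g : nat -> T) (V : seq T) :
  uniq V -> (forall i, i \in s -> g i \in V) ->
  \sum_(i <- s) F (g i) = \sum_(v <- V) (count (fun i => g i == v) s)%:R * F v.
Proof.
elim: s => [|a s IH] hV hs.
  by rewrite big_nil big1 // => v _; rewrite /= mul0r.
rewrite big_cons IH //; last by move=> i hi; apply: hs; rewrite in_cons hi orbT.
rewrite [RHS](eq_bigr (fun v => (g a == v)%:R * F v + (count (fun i => g i == v) s)%:R * F v));
  last by move=> v _; rewrite /= natrD mulrDl.
rewrite big_split /=; congr (_ + _).
rewrite (bigD1_seq (g a)) //=; last by apply: hs; rewrite mem_head.
rewrite eqxx mul1r big1 ?addr0 // => v; rewrite eq_sym => /negbTE ->; by rewrite mul0r.
Qed.

Lemma sum_ind (C : numClosedFieldType) (T : Type) (P : pred T) (s : seq T) :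
  \sum_(v <- s) (P v)%:R = (count P s)%:R :> C.
Proof. by elim: s => [|a s IH]; rewrite ?big_nil // big_cons IH /= natrD. Qed.

Lemma sum_ind_mul (C : numClosedFieldType) (T : Type) (P : pred T) (F : T -> C) (s : seq T) :
  \sum_(v <- s) (P v)%:R * F v = \sum_(v <- s | P v) F v.
Proof. by rewrite [RHS]big_mkcond; apply: eq_bigr => v _; case: (P v); rewrite ?mul1r ?mul0r. Qed.

Lemma big_filter_perm (R : Type) (idx : R) (op : Monoid.com_law idx) (T : eqType)
  (s1 s2 : seq T) (P : pred T) (F : T -> R) :
  uniq s1 -> uniq s2 -> (forall x, P x -> (x \in s1) = (x \in s2)) ->
  \big[op/idx]_(x <- s1 | P x) F x = \big[op/idx]_(x <- s2 | P x) F x.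
Proof.
move=> u1 u2 H; rewrite -[LHS]big_filter -[RHS]big_filter; apply: perm_big; apply: uniq_perm; rewrite ?filter_uniq //.
by move=> x; rewrite !mem_filter; case Px: (P x) => //=; apply: H.
Qed.

Lemma sign_prod (C : numClosedFieldType) (t : C) (s : seq C) : t \is Num.real ->
  (forall x, x \in s -> (x \is Num.real) && (x != t)) ->
  0 < (-1) ^+ count (fun x => t < x) s * \prod_(x <- s) (t - x).
Proof.
move=> ht; elim: s => [|a s IH] hs; first by rewrite big_nil /= expr0 mul1r ltr01.
rewrite big_cons /= exprD mulrACA; apply: mulr_gt0; last first.
  by apply: IH => x hx; apply: hs; rewrite in_cons hx orbT.
have /andP [ha hne] := hs a (mem_head _ _).
case hlt: (t < a) => /=; first by rewrite expr1 mulN1r opprB subr_gt0.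
by rewrite expr0 mul1r subr_gt0 lt_neqAle hne /= real_leNgt // hlt.
Qed.

Lemma neqSn k : (k == k.+1) = false. Proof. by elim: k. Qed.
Lemma neqnS k : (k.+1 == k) = false. Proof. by elim: k. Qed.

Lemma sum_const1 (C : numClosedFieldType) (T : Type) (s : seq T) :
  \sum_(x <- s) (1 : C) = (size s)%:R.
Proof. by elim: s => [|a s IH]; rewrite ?big_nil // big_cons IH /= mulrS. Qed.

Lemma ord_iota (C : numClosedFieldType) (F : nat -> C) m :
  \sum_(i < m) F i = \sum_(i <- iota 0 m) F i.
Proof. by rewrite -(big_mkord xpredT) /index_iota subn0. Qed.

Lemma natr_diff1 (C : numClosedFieldType) a b : a%:R - b%:R = 1 :> C -> a = b.+1.
Proof. by move/eqP; rewrite subr_eq addrC natr1 eqr_nat => /eqP. Qed.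

Lemma bigfV (C : numClosedFieldType) (T : Type) (P : pred T) (s : seq T) (F : T -> C) :
  \sum_(v <- s | P v) F v = \sum_(v <- [seq x <- s | P x]) F v.
Proof. by rewrite big_filter. Qed.

Lemma prodX_coef (C : numClosedFieldType) (s : seq C) :
  (\prod_(x <- s) ('X - x%:P))`_(size s) = 1 /\
  (if size s == 0%N then 0 else (\prod_(x <- s) ('X - x%:P))`_(size s).-1) = - \sum_(x <- s) x.
Proof.
elim: s => [|a s [IH1 IH2]].
  by rewrite !big_nil coef1 oppr0.
have hsz : leq (size (\prod_(x <- s) ('X - x%:P))) (size s).+1 by rewrite size_prod_XsubC.
rewrite /= !big_cons mulrBl !coefB coefXM coefCM /= IH1 (nth_default _ hsz) mulr0 subr0; split => //.
rewrite coefXM coefCM IH1 mulr1 IH2; by rewrite opprD addrC.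
Qed.

Lemma hornerPX (C : numClosedFieldType) (s : seq C) (P : pred C) (t : C) :
  (\prod_(x <- s | P x) ('X - x%:P)).[t] = \prod_(x <- s | P x) (t - x).
Proof. by rewrite horner_prod; apply: eq_bigr => x _; rewrite hornerXsubC. Qed.

Lemma adjmxM (C : numClosedFieldType) m (A B : 'M[C]_m) : adjmx (A *m B) = adjmx B *m adjmx A.
Proof.
apply/matrixP => i j; rewrite !mxE rmorph_sum; apply: eq_bigr => k _.
by rewrite !mxE rmorphM mulrC.
Qed.

Lemma adjmxB (C : numClosedFieldType) m (A B : 'M[C]_m) : adjmx (A - B) = adjmx A - adjmx B.
Proof. by apply/matrixP => i j; rewrite !mxE rmorphB. Qed.

Lemma adjmxE (C : numClosedFieldType) m (A : 'M[C]_m) i j : adjmx A i j = (A j i)^*.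
Proof. by rewrite !mxE. Qed.

Lemma skewE (C : numClosedFieldType) m (A : 'M[C]_m) : skew_herm A -> forall i j, (A i j)^* = - A j i.
Proof. by move=> h i j; rewrite -adjmxE h mxE. Qed.

Lemma tr_delta (C : numClosedFieldType) m (A : 'M[C]_m) i j : \tr (A *m delta_mx i j) = A j i.
Proof.
rewrite /mxtrace (bigD1 j) //= big1 ?addr0.
  rewrite mxE (bigD1 i) //= big1 ?addr0; first by rewrite mxE !eqxx mulr1.
  by move=> k hk; rewrite mxE (negbTE hk) mulr0.
move=> t ht; rewrite mxE big1 // => k _; by rewrite mxE (negbTE ht) andbF mulr0.
Qed.

Section Comb.
Variables (C : numClosedFieldType) (n : nat) (lam mu : nat -> C).
Hypothesis hlam_real : forall i, (i <= n)%N -> lam i \is Num.real.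
Hypothesis hmu_real : forall i, (i < n)%N -> mu i \is Num.real.
Hypothesis hinter : forall i, (i < n)%N -> lam i.+1 <= mu i <= lam i.

Local Notation nl := (n_lam n lam).
Local Notation nm := (n_mu n mu).
Local Notation isW := (is_W n lam mu).
Local Notation isM := (is_M n lam mu).
Local Notation isP := (is_par n lam mu).

Definition Vals := undup ([seq lam i | i <- iota 0 n.+1] ++ [seq mu i | i <- iota 0 n]).

Lemma Vals_uniq : uniq Vals. Proof. exact: undup_uniq. Qed.

Lemma lam_in_Vals i : (i <= n)%N -> lam i \in Vals.
Proof. by move=> hi; rewrite mem_undup mem_cat map_f // mem_iota. Qed.

Lemma mu_in_Vals i : (i < n)%N -> mu i \in Vals.
Proof. by move=> hi; rewrite mem_undup mem_cat orbC map_f // mem_iota. Qed.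

Lemma Vals_real v : v \in Vals -> v \is Num.real.
Proof.
rewrite mem_undup mem_cat => /orP [/mapP [i hi ->] | /mapP [i hi ->]];
  rewrite mem_iota in hi; [apply: hlam_real | apply: hmu_real]; by case/andP: hi.
Qed.

Lemma gt_inter s : leq (count (fun i => s < mu i) (iota 0 n)) (count (fun i => s < lam i) (iota 0 n.+1)) /\
   leq (count (fun i => s < lam i) (iota 0 n.+1)) (count (fun i => s < mu i) (iota 0 n)).+1.
Proof.
split.
  apply: (leq_trans (@count_iota_le _ (fun i => s < lam i) n _)).
    by move=> i hi h; have /andP[_ h2] := hinter hi; exact: lt_le_trans h h2.
  by rewrite count_iota_last leq_addr.
rewrite count_iotaS -add1n; apply: leq_add; first by rewrite leq_b1.
apply: count_iota_le => i hi h; have /andP[h1 _] := hinter hi; exact: lt_le_trans h h1.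
Qed.

Lemma ge_inter s : leq (count (fun i => s <= mu i) (iota 0 n)) (count (fun i => s <= lam i) (iota 0 n.+1)) /\
   leq (count (fun i => s <= lam i) (iota 0 n.+1)) (count (fun i => s <= mu i) (iota 0 n)).+1.
Proof.
split.
  apply: (leq_trans (@count_iota_le _ (fun i => s <= lam i) n _)).
    by move=> i hi h; have /andP[_ h2] := hinter hi; exact: le_trans h h2.
  by rewrite count_iota_last leq_addr.
rewrite count_iotaS -add1n; apply: leq_add; first by rewrite leq_b1.
apply: count_iota_le => i hi h; have /andP[h1 _] := hinter hi; exact: le_trans h h1.
Qed.

Lemma shape3 v : [|| nl v == nm v, nl v == (nm v).+1 | nm v == (nl v).+1].
Proof.
have [h1 h2] := gt_inter v; have [h3 h4] := ge_inter v.
rewrite !count_le_split in h3 h4.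
rewrite /n_lam /n_mu.
move: h1 h2 h3 h4.
set a := count (fun i => v < lam i) (iota 0 n.+1); set b := count (fun i => v < mu i) (iota 0 n).
set a' := count (fun i => lam i == v) (iota 0 n.+1); set b' := count (fun i => mu i == v) (iota 0 n).
move=> h1 h2 h3 h4.
have [e|e] := eqVneq a' b'; first by [].
have [e2|e2] := eqVneq a' b'.+1; first by rewrite orbT.
have -> : b' == a'.+1 by apply/eqP; lia.
by rewrite !orbT.
Qed.

Lemma M_count v : isM v ->
  count (fun i => v < lam i) (iota 0 n.+1) = (count (fun i => v < mu i) (iota 0 n)).+1.
Proof.
rewrite /is_M /n_lam /n_mu => /eqP hM.
have [h1 h2] := gt_inter v; have [h3 h4] := ge_inter v.
rewrite !count_le_split in h3 h4.
move: h1 h2 h3 h4 hM.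
set a := count (fun i => v < lam i) (iota 0 n.+1); set b := count (fun i => v < mu i) (iota 0 n).
set a' := count (fun i => lam i == v) (iota 0 n.+1); set b' := count (fun i => mu i == v) (iota 0 n).
move=> h1 h2 h3 h4 hM; lia.
Qed.

Lemma diff_shape v : (nl v)%:R - (nm v)%:R = (isW v)%:R - (isM v)%:R :> C.
Proof.
rewrite /is_W /is_M.
case/or3P: (shape3 v) => /eqP ->.
- by rewrite !neqSn !subrr.
- rewrite eqxx (_ : (nm v == (nm v).+2) = false); last by apply/eqP; lia.
  by rewrite mulrS addrK subr0.
- rewrite eqxx (_ : (nl v == (nl v).+2) = false); last by apply/eqP; lia.
  by rewrite mulrS opprD addrCA subrr addr0 sub0r.
Qed.

Lemma group_lam (F : C -> C) :
  \sum_(i <- iota 0 n.+1) F (lam i) = \sum_(v <- Vals) (nl v)%:R * F v.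
Proof.
apply: sum_group; first exact: Vals_uniq.
by move=> i; rewrite mem_iota => /andP [_ hi]; apply: lam_in_Vals.
Qed.

Lemma group_mu (F : C -> C) :
  \sum_(i <- iota 0 n) F (mu i) = \sum_(v <- Vals) (nm v)%:R * F v.
Proof.
apply: sum_group; first exact: Vals_uniq.
by move=> i; rewrite mem_iota => /andP [_ hi]; apply: mu_in_Vals.
Qed.

Lemma WM_sum (F : C -> C) :
  \sum_(v <- Vals | isW v) F v - \sum_(v <- Vals | isM v) F v =
  \sum_(i <- iota 0 n.+1) F (lam i) - \sum_(i <- iota 0 n) F (mu i).
Proof.
rewrite group_lam group_mu -sumrB -(sum_ind_mul isW) -(sum_ind_mul isM) -sumrB; apply: eq_bigr => v _.
by rewrite -!mulrBl diff_shape.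
Qed.

Definition WL := [seq v <- Vals | isW v].
Definition ML := [seq v <- Vals | isM v].

Lemma WM_size : size WL = (size ML).+1.
Proof.
apply: (@natr_diff1 C); have := WM_sum (fun _ => 1).
by rewrite (bigfV isW) (bigfV isM) !sum_const1 !size_iota => ->; rewrite mulrS addrK.
Qed.

Lemma WM_sum_id : \sum_(v <- WL) v - \sum_(v <- ML) v = c_ n lam mu.
Proof. by rewrite !big_filter WM_sum /c_ !ord_iota. Qed.

Lemma M_above t : isM t ->
  count (fun v => isW v && (t < v)) Vals = (count (fun v => isM v && (t < v)) Vals).+1.
Proof.
move=> hM; apply: (@natr_diff1 C).
have := WM_sum (fun v => ((t < v)%R)%:R).
rewrite (bigfV isW) (bigfV isM) (@sum_ind C _ (fun v => t < v)) (@sum_ind C _ (fun v => t < v)).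
rewrite (@sum_ind C _ (fun i => t < lam i)) (@sum_ind C _ (fun i => t < mu i)) !count_filter M_count //.
rewrite mulrS addrK => h.
have e1 : count (fun v => isW v && (t < v)) Vals = count (predI (fun x => t < x) isW) Vals.
  by apply: eq_count => x; rewrite /= andbC.
have e2 : count (fun v => isM v && (t < v)) Vals = count (predI (fun x => t < x) isM) Vals.
  by apply: eq_count => x; rewrite /= andbC.
by rewrite e1 e2.
Qed.

Lemma W_in v : isW v -> (v \in lam_vals n lam) && (v \in Vals).
Proof.
move=> /eqP h; have: (0 < nl v)%N by rewrite h.
rewrite /n_lam -has_count => /hasP [i hi /eqP <-].
rewrite mem_iota in hi; rewrite /lam_vals mem_undup map_f ?mem_iota //= lam_in_Vals //.
Qed.

Lemma M_in v : isM v -> (v \in mu_vals n mu) && (v \in Vals).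
Proof.
move=> /eqP h; have: (0 < nm v)%N by rewrite h.
rewrite /n_mu -has_count => /hasP [i hi /eqP <-].
rewrite mem_iota in hi; rewrite /mu_vals mem_undup map_f ?mem_iota //= mu_in_Vals //.
Qed.

Lemma WM_excl v : isW v -> isM v -> False.
Proof. by rewrite /is_W /is_M => /eqP h1 /eqP h2; lia. Qed.
Lemma WP_excl v : isW v -> isP v -> False.
Proof. by rewrite /is_W /is_par => /eqP h1 /eqP h2; lia. Qed.
Lemma MP_excl v : isM v -> isP v -> False.
Proof. by rewrite /is_M /is_par => /eqP h1 /eqP h2; lia. Qed.

Lemma rsq_pos t : isM t -> 0 < r_sq n lam mu t.
Proof.
move=> hM; rewrite /r_sq hM.
have ht : t \is Num.real by apply: Vals_real; case/andP: (M_in hM).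
rewrite (@big_filter_perm _ _ _ _ (lam_vals n lam) Vals); first last.
- by move=> x hx; case/andP: (W_in hx) => -> ->.
- exact: Vals_uniq.
- exact: undup_uniq.
rewrite (@big_filter_perm _ _ _ _ (mu_vals n mu) Vals (fun x => isM x && (x != t))); first last.
- by move=> x /andP [hx _]; case/andP: (M_in hx) => -> ->.
- exact: Vals_uniq.
- exact: undup_uniq.
rewrite prodfV.
set PW := \prod_(x <- Vals | isW x) (t - x).
set PM := \prod_(x <- Vals | isM x && (x != t)) (t - x).
have hA : 0 < (-1) ^+ count (fun x => t < x) [seq x <- Vals | isW x] * PW.
  rewrite /PW -big_filter; apply: sign_prod => // x; rewrite mem_filter => /andP [hW hV].
  rewrite Vals_real //=; apply/eqP => e; rewrite e in hW; exact: WM_excl hW hM.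
have hB : 0 < (-1) ^+ count (fun x => t < x) [seq x <- Vals | isM x && (x != t)] * PM.
  rewrite /PM -big_filter; apply: sign_prod => // x; rewrite mem_filter => /andP [/andP [_ hne] hV].
  by rewrite Vals_real.
have ea : count (fun x => t < x) [seq x <- Vals | isW x] =
   (count (fun x => t < x) [seq x <- Vals | isM x && (x != t)]).+1.
  rewrite !count_filter.
  have e1 : count (predI (fun x => t < x) isW) Vals = count (fun v => isW v && (t < v)) Vals.
    by apply: eq_count => x; rewrite /= andbC.
  have e2 : count (predI (fun x => t < x) (fun x => isM x && (x != t))) Vals =
            count (fun v => isM v && (t < v)) Vals.
    apply: eq_count => x /=; case: (boolP (t < x)) => h; last by rewrite andbF.
    by rewrite (gt_eqF h) andbT.
  by rewrite e1 e2 M_above.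
rewrite ea in hA.
move: hA hB; set b := count _ _ => hA hB.
rewrite -signr_odd /= in hA; rewrite -signr_odd in hB.
case: (odd b) hA hB => /= hA hB.
- rewrite expr0 mul1r in hA; rewrite expr1 mulN1r in hB.
  by rewrite -mulrN -invrN; apply: divr_gt0.
- rewrite expr1 mulN1r in hA; rewrite expr0 mul1r in hB.
  by rewrite -mulNr; apply: divr_gt0.
Qed.

Lemma r_sqE t : r_ n lam mu t ^+ 2 = r_sq n lam mu t.
Proof. exact: sqrtCK. Qed.

Lemma r_nonM t : ~~ isM t -> r_ n lam mu t = 0.
Proof. by move=> h; rewrite /r_ /r_sq (negbTE h) sqrtC0. Qed.

Lemma r_real t : r_ n lam mu t \is Num.real.
Proof.
case: (boolP (isM t)) => h; last by rewrite r_nonM.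
by apply: sqrtC_real; apply: ltW; apply: rsq_pos.
Qed.

Lemma r_neq0 t : isM t -> r_ n lam mu t != 0.
Proof. by move=> h; rewrite /r_ sqrtC_eq0 gt_eqF // rsq_pos. Qed.

Lemma ML_uniq : uniq ML. Proof. exact/filter_uniq/Vals_uniq. Qed.
Lemma WL_uniq : uniq WL. Proof. exact/filter_uniq/Vals_uniq. Qed.

Lemma r_sq_form t : isM t ->
  r_sq n lam mu t = - (\prod_(x <- WL) (t - x) / \prod_(x <- ML | x != t) (t - x)).
Proof.
move=> hM; rewrite /r_sq hM.
rewrite (@big_filter_perm _ _ _ _ (lam_vals n lam) Vals); first last.
- by move=> x hx; case/andP: (W_in hx) => -> ->.
- exact: Vals_uniq.
- exact: undup_uniq.
rewrite (@big_filter_perm _ _ _ _ (mu_vals n mu) Vals (fun x => isM x && (x != t))); first last.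
- by move=> x /andP [hx _]; case/andP: (M_in hx) => -> ->.
- exact: Vals_uniq.
- exact: undup_uniq.
by rewrite prodfV /WL /ML big_filter big_filter_cond.
Qed.

Lemma Mt_neq0 t : t \in ML -> \prod_(x <- ML | x != t) (t - x) != 0.
Proof.
move=> ht; rewrite prodf_seq_neq0; apply/allP => x hx; apply/implyP => hne.
by rewrite subr_eq0 eq_sym.
Qed.

Lemma sum_rsq_W l : isW l ->
  \sum_(t <- ML) r_sq n lam mu t / (l - t) = l - c_ n lam mu.
Proof.
move=> hW.
set c := c_ n lam mu.
set G := \prod_(x <- WL) ('X - x%:P).
set H := \prod_(x <- c :: ML) ('X - x%:P).
pose Ht t := \prod_(x <- ML | x != t) ('X - x%:P).
pose R := G - H + \sum_(t <- ML) r_sq n lam mu t *: Ht t.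
have hR : R = 0.
  apply/eqP; apply/negPn/negP => hR0.
  have hroots : all (root R) ML.
    apply/allP => t ht; have htM : isM t by move: ht; rewrite mem_filter => /andP [].
    rewrite /root /R hornerD hornerD hornerN horner_sum /G /H !hornerPX.
    rewrite big_cons (bigD1_seq (r := ML) t) //= ?ML_uniq // subrr mul0r mulr0 oppr0 addr0.
    rewrite (bigD1_seq (r := ML) t) //= ?ML_uniq // hornerZ.
    rewrite [\sum_(i <- ML | _) _]big1_seq; last first.
      move=> s /andP [hst hs] /=; rewrite hornerZ hornerPX big_mkcond.
      by rewrite (bigD1_seq t) //= ?ML_uniq // eq_sym hst subrr mul0r mulr0.
    rewrite addr0 r_sq_form // /Ht hornerPX.
    have := Mt_neq0 ht; set Q := \prod_(x <- ML | x != t) (t - x) => hQ.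
    apply/eqP; field; exact: hQ.
  have := max_poly_roots hR0 hroots ML_uniq.
  suff : (size R <= size ML)%N by move=> h1 h2; have := leq_ltn_trans h1 h2; rewrite ltnn.
  apply/leq_sizeP => j hj.
  rewrite /R coefD coefB coef_sum big1_seq ?addr0; last first.
    move=> t /andP [_ ht]; rewrite coefZ nth_default ?mulr0 //.
    rewrite /Ht -big_filter size_prod_XsubC size_filter.
    have : (count (fun x => x != t) ML < size ML)%N.
      rewrite -(count_predC (fun x => x != t) ML) -addn1 leq_add2l -has_count.
      by apply/hasP; exists t => //=; rewrite negbK.
    by move=> h; apply: leq_trans hj.
  have hsW := WM_size.
  have hG : (size G <= (size ML).+2)%N by rewrite /G size_prod_XsubC hsW.
  have hH : (size H <= (size ML).+2)%N by rewrite /H size_prod_XsubC.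
  have [cG1 cG2] := prodX_coef WL; have [cH1 cH2] := prodX_coef (c :: ML).
  rewrite hsW /= -/G in cG1 cG2; rewrite /= -/H in cH1 cH2.
  move: hj; rewrite leq_eqVlt => /orP [/eqP <- | ].
    rewrite cG2 cH2 big_cons.
    have e := WM_sum_id; rewrite -/c in e; rewrite -e; ring.
  rewrite leq_eqVlt => /orP [/eqP <- | hj].
    by rewrite cG1 cH1 subrr.
  by rewrite !nth_default ?subrr //; apply: leq_trans hj.
have hl : l \in Vals by case/andP: (W_in hW).
have hlW : l \in WL by rewrite mem_filter hW.
have hHl : \prod_(x <- ML) (l - x) != 0.
  rewrite prodf_seq_neq0; apply/allP => x hx /=; rewrite subr_eq0; apply/eqP => e.
  by move: hx; rewrite -e mem_filter => /andP [hM _]; exact: WM_excl hW hM.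
have := congr1 (fun p => p.[l]) hR.
rewrite /R hornerD hornerD hornerN horner_sum /G /H !horner_prod horner0.
rewrite (bigD1_seq l) //= ?WL_uniq // hornerXsubC subrr mul0r sub0r big_cons /= hornerXsubC.
under eq_bigr do rewrite hornerXsubC.
set HM := \prod_(x <- ML) (l - x).
have eS : \sum_(t <- ML) (r_sq n lam mu t *: Ht t).[l] = HM * \sum_(t <- ML) r_sq n lam mu t / (l - t).
  rewrite mulr_sumr; apply: eq_big_seq => t ht.
  rewrite hornerZ horner_prod /HM (bigD1_seq t) //= ?ML_uniq //.
  under eq_bigr do rewrite hornerXsubC.
  have hlt : l - t != 0.
    rewrite subr_eq0; apply/eqP => e; move: ht; rewrite -e mem_filter => /andP [hM _].
    exact: WM_excl hW hM.
  by field.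
rewrite eS => /eqP; rewrite addrC subr_eq0 => /eqP h.
apply: (mulfI hHl); by rewrite h mulrC.
Qed.

Lemma CW_zero l : isW l -> C_ n lam mu l = 0.
Proof.
move=> hW; rewrite /C_.
rewrite (@big_filter_perm _ _ _ _ (mu_vals n mu) Vals isM); first last.
- by move=> x hx; case/andP: (M_in hx) => -> ->.
- exact: Vals_uniq.
- exact: undup_uniq.
rewrite -big_filter -/ML.
under eq_bigr do rewrite r_sqE.
rewrite sum_rsq_W // /c_; ring.
Qed.


Local Notation p := (ptilde n lam mu).
Local Notation L := (@lift n.+1 ord0).
Local Notation z := (z_ n lam mu).
Local Notation c := (c_ n lam mu).

Lemma p00 : p ord0 ord0 = c. Proof. by rewrite mxE. Qed.
Lemma p0L j : p ord0 (L j) = (z j)^*. Proof. by rewrite mxE lift0. Qed.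
Lemma pL0 j : p (L j) ord0 = z j. Proof. by rewrite mxE lift0. Qed.
Lemma pLL j k : p (L j) (L k) = if j == k then mu j else 0.
Proof. by rewrite mxE !lift0 /= (inj_eq (@lift_inj _ ord0)); case: eqP. Qed.

Lemma XpLL (X : 'M[C]_n.+1) j k :
  (X *m p) (L j) (L k) = X (L j) ord0 * (z k)^* + X (L j) (L k) * mu k.
Proof.
rewrite mxE big_ord_recl p0L; congr (_ + _).
rewrite (bigD1 k) //= pLL eqxx big1 ?addr0 // => l hl.
by rewrite pLL (negbTE hl) mulr0.
Qed.

Lemma pXLL (X : 'M[C]_n.+1) j k :
  (p *m X) (L j) (L k) = z j * X ord0 (L k) + mu j * X (L j) (L k).
Proof.
rewrite mxE big_ord_recl pL0; congr (_ + _).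
rewrite (bigD1 j) //= pLL eqxx big1 ?addr0 // => l hl.
by rewrite pLL eq_sym (negbTE hl) mul0r.
Qed.

Lemma XpL0 (X : 'M[C]_n.+1) j :
  (X *m p) (L j) ord0 = X (L j) ord0 * c + \sum_(l < n) X (L j) (L l) * z l.
Proof. by rewrite mxE big_ord_recl p00; congr (_ + _); apply: eq_bigr => l _; rewrite pL0. Qed.

Lemma pXL0 (X : 'M[C]_n.+1) j :
  (p *m X) (L j) ord0 = z j * X ord0 ord0 + mu j * X (L j) ord0.
Proof.
rewrite mxE big_ord_recl pL0; congr (_ + _).
rewrite (bigD1 j) //= pLL eqxx big1 ?addr0 // => l hl.
by rewrite pLL eq_sym (negbTE hl) mul0r.
Qed.

Lemma brE (X : 'M[C]_n.+1) i j : bracket X p i j = (X *m p) i j - (p *m X) i j.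
Proof. by rewrite !mxE. Qed.


Lemma c_real : c \is Num.real.
Proof.
rewrite /c_ rpredB //; apply: rpred_sum => i _.
  by apply: hlam_real; rewrite -ltnS. by apply: hmu_real.
Qed.

Lemma conj_real (x : C) : x \is Num.real -> x^* = x.
Proof. by rewrite CrealE => /eqP. Qed.

Lemma z_real j : z j \is Num.real.
Proof. by rewrite /z_; case: ifP => _; [exact: real0 | exact: r_real]. Qed.

Lemma zconj j : (z j)^* = z j.
Proof. exact/conj_real/z_real. Qed.

Lemma p_herm : adjmx p = p.
Proof.
apply/matrixP => i j; rewrite adjmxE.
case: (unliftP ord0 i) => [i' ->|->]; case: (unliftP ord0 j) => [j' ->|->].
- rewrite !pLL eq_sym; case: eqP => [->|_]; last by rewrite conjC0.
  by rewrite conj_real // hmu_real.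
- by rewrite p0L pL0 conjCK.
- by rewrite p0L pL0.
- by rewrite p00 conj_real // c_real.
Qed.

Lemma br_herm (Y : 'M[C]_n.+1) : skew_herm Y -> adjmx (bracket Y p) = bracket Y p.
Proof.
move=> hY; rewrite /bracket adjmxB !adjmxM p_herm hY.
by rewrite mulmxN mulNmx opprK addrC.
Qed.

Lemma tr_perp (X Z : 'M[C]_n.+1) :
  \tr (p *m (X *m Z - Z *m X)) = - \tr (bracket X p *m Z).
Proof.
have e : \tr (p *m (Z *m X)) = \tr (X *m p *m Z).
  by rewrite mulmxA mxtrace_mulC mulmxA.
rewrite /bracket mulmxBr mulmxBl !raddfB /= e -mulmxA.
by rewrite opprK -mulmxA addrC.
Qed.

Lemma perp_LL (X : 'M[C]_n.+1) : in_perp lam mu X ->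
  forall j k, bracket X p (L j) (L k) = 0.
Proof.
move=> hperp.
have key : forall Z, in_LieK Z -> \tr (bracket X p *m Z) = 0.
  move=> Z hZ; have := hperp Z hZ; rewrite /omegaL => /eqP.
  rewrite mulf_eq0 invr_eq0 (negbTE (neq0Ci _)) /= tr_perp oppr_eq0 => /eqP //.
have n0 : forall j : 'I_n, (ord0 == L j) = false.
  by move=> j; apply/negbTE/neq_lift.
move=> k j.
set a := bracket X p.
have h1 : a (L k) (L j) - a (L j) (L k) = 0.
  rewrite -(key (delta_mx (L j) (L k) - delta_mx (L k) (L j))); first by rewrite mulmxBr raddfB /= !tr_delta.
  split; [|split].
  - apply/matrixP => r s; rewrite adjmxE !mxE rmorphB /= !conjC_nat.
    by rewrite opprB [(s == L j) && _]andbC [(s == L k) && _]andbC.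
  - by move=> s; rewrite !mxE !n0 /= subrr.
  - by move=> r; rewrite !mxE !n0 !andbF /= subrr.
have h2 : 'i * (a (L k) (L j) + a (L j) (L k)) = 0.
  rewrite -(key ('i *: (delta_mx (L j) (L k) + delta_mx (L k) (L j)))); first by rewrite -scalemxAr mxtraceZ mulmxDr mxtraceD !tr_delta.
  split; [|split].
  - apply/matrixP => r s; rewrite adjmxE !mxE rmorphM rmorphD /= conjCi !conjC_nat.
    by rewrite mulNr addrC [(s == L j) && _]andbC [(s == L k) && _]andbC.
  - by move=> s; rewrite !mxE !n0 /= addr0 mulr0.
  - by move=> r; rewrite !mxE !n0 !andbF /= addr0 mulr0.
move: h2 => /eqP; rewrite mulf_eq0 (negbTE (neq0Ci _)) /= => /eqP h2.
move: h1 => /eqP; rewrite subr_eq0 => /eqP h1.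
rewrite h1 -mulr2n in h2; move/eqP: h2; rewrite mulrn_eq0 /= => /eqP.
by rewrite h1.
Qed.


Lemma F1 (X : 'M[C]_n.+1) : skew_herm X -> in_perp lam mu X -> forall j k : 'I_n,
  X (L j) ord0 * z k + z j * (X (L k) ord0)^* + X (L j) (L k) * (mu k - mu j) = 0.
Proof.
move=> hX hperp j k; have := perp_LL hperp j k; rewrite brE XpLL pXLL zconj.
have e : X ord0 (L k) = - (X (L k) ord0)^* by rewrite skewE // opprK.
rewrite e => <-; ring.
Qed.

Lemma u_expr (X : 'M[C]_n.+1) (j : 'I_n) : bracket X p (L j) ord0 =
  X (L j) ord0 * c + \sum_(l < n) X (L j) (L l) * z l - z j * X ord0 ord0 - mu j * X (L j) ord0.
Proof. rewrite brE XpL0 pXL0; ring. Qed.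

Lemma z_nonM j : ~~ isM (mu j) -> z j = 0.
Proof. by move=> h; rewrite /z_; case: ifP => // _; exact: r_nonM. Qed.

Lemma z_first j : isM (mu j) -> ~~ has (fun j' => mu j' == mu j) (iota 0 j) -> z j != 0.
Proof. by move=> hM hf; rewrite /z_ (negbTE hf) r_neq0. Qed.

Lemma z_neq0 j : z j != 0 -> isM (mu j) && ~~ has (fun j' => mu j' == mu j) (iota 0 j).
Proof.
rewrite /z_; case: ifP => [_|hf h]; first by rewrite eqxx.
rewrite /= andbT; case: (boolP (isM (mu j))) => // hM.
by rewrite r_nonM ?eqxx in h.
Qed.

Lemma firsts_eq j l : ~~ has (fun j' => mu j' == mu j) (iota 0 j) ->
  ~~ has (fun j' => mu j' == mu l) (iota 0 l) -> mu j = mu l -> j = l.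
Proof.
move=> hj hl e; case: (ltngtP j l) => // h.
  by move/hasPn: hl => /(_ j); rewrite mem_iota h e eqxx => /(_ isT).
by move/hasPn: hj => /(_ l); rewrite mem_iota h e eqxx => /(_ isT).
Qed.

Lemma has_mu N : has (fun j' => mu j' == mu N) (iota 0 N) = (mu N \in undup [seq mu i | i <- iota 0 N]).
Proof. by rewrite mem_undup -has_pred1 has_map. Qed.

Lemma firsts_sum (g : C -> C) N :
  \sum_(l < N) (if has (fun j' => mu j' == mu l) (iota 0 l) then 0 else g (mu l)) =
  \sum_(t <- undup [seq mu i | i <- iota 0 N]) g t.
Proof.
elim: N => [|N IH]; first by rewrite big_ord0 big_nil.
rewrite big_ord_recr IH (_ : iota 0 N.+1 = iota 0 N ++ [:: N]); last by rewrite -addn1 iotaD.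
rewrite map_cat undup_cat big_cat /= big_seq1.
rewrite has_mu; case: ifP => hin.
  rewrite addr0 (bigD1_seq (mu N)) //= ?undup_uniq // addrC big_filter; congr (_ + _).
  by apply: eq_bigl => x; rewrite in_cons in_nil orbF.
rewrite (_ : [seq x <- _ | x \notin [:: mu N]] = undup [seq mu i | i <- iota 0 N]) //.
apply/all_filterP/allP => x hx; rewrite mem_seq1; apply/eqP => e.
by rewrite -e hx in hin.
Qed.


Lemma zsum m : \sum_(l < n) z l ^+ 2 / (m - mu l) =
  \sum_(t <- mu_vals n mu | isM t) r_ n lam mu t ^+ 2 / (m - t).
Proof.
rewrite [RHS]big_mkcond /=.
rewrite (eq_bigr (fun t => r_ n lam mu t ^+ 2 / (m - t))); last first.
  by move=> t _; case: ifP => // h; rewrite r_nonM ?h // expr2 !mul0r.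
rewrite /mu_vals -firsts_sum; apply: eq_bigr => l _.
by rewrite /z_; case: ifP => // _; rewrite expr2 !mul0r.
Qed.

Lemma uC (X : 'M[C]_n.+1) (j : 'I_n) : skew_herm X -> in_perp lam mu X -> ~~ isM (mu j) ->
  bracket X p (L j) ord0 = C_ n lam mu (mu j) * X (L j) ord0.
Proof.
move=> hX hperp hj.
rewrite u_expr (z_nonM hj) mul0r subr0.
have e : \sum_(l < n) X (L j) (L l) * z l = X (L j) ord0 * \sum_(l < n) z l ^+ 2 / (mu j - mu l).
  rewrite mulr_sumr; apply: eq_bigr => l _.
  have [zl0|zl] := eqVneq (z l) 0; first by rewrite zl0 mulr0 expr2 !mul0r mulr0.
  have hMl : isM (mu l) by case/andP: (z_neq0 zl).
  have hd : mu j - mu l != 0.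
    by rewrite subr_eq0; apply/eqP => e; rewrite e hMl in hj.
  have := F1 hX hperp j l; rewrite (z_nonM hj) mul0r addr0 => h.
  have eX : X (L j) (L l) = X (L j) ord0 * z l / (mu j - mu l).
    apply: (mulIf hd); rewrite divfK //.
    apply/eqP; rewrite -subr_eq0 -oppr_eq0; apply/eqP; rewrite -h; ring.
  by rewrite eX; field.
rewrite e /C_ -zsum /c_; ring.
Qed.


Lemma mu_conj (j : 'I_n) : (mu j)^* = mu j.
Proof. by apply: conj_real; apply: hmu_real. Qed.

Lemma x_imag (X : 'M[C]_n.+1) (j : 'I_n) : skew_herm X -> in_perp lam mu X -> z j != 0 ->
  (X (L j) ord0)^* = - X (L j) ord0.
Proof.
move=> hX hperp hz; have := F1 hX hperp j j; rewrite subrr mulr0 addr0 => h.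
have : z j * ((X (L j) ord0)^* + X (L j) ord0) = 0 by rewrite -h; ring.
by move/eqP; rewrite mulf_eq0 (negbTE hz) /= addr_eq0 => /eqP.
Qed.

Lemma x_zero (X : 'M[C]_n.+1) (j : 'I_n) : skew_herm X -> in_perp lam mu X ->
  isM (mu j) -> has (fun j' => mu j' == mu j) (iota 0 j) -> X (L j) ord0 = 0.
Proof.
move=> hX hperp hM hhas.
have exP : exists m, (m < n)%N && (mu m == mu j) by exists j; rewrite ltn_ord eqxx.
case: (ex_minnP exP) => f /andP [hf /eqP hfe] hmin.
have hfirst : ~~ has (fun j' => mu j' == mu f) (iota 0 f).
  apply/hasPn => k; rewrite mem_iota => /andP [_ hk]; apply/negP; rewrite hfe => e.
  have := hmin k; rewrite e (ltn_trans hk hf) => /(_ isT); by rewrite leqNgt hk.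
have hfj : (f < j)%N.
  case/hasP: hhas => k; rewrite mem_iota => /andP [_ hk] e.
  by apply: (leq_ltn_trans _ hk); apply: hmin; rewrite e (ltn_trans hk (ltn_ord j)).
set f' := Ordinal hf.
have hzf : z f' != 0 by apply: z_first; [by rewrite /= hfe | exact: hfirst].
have hzj : z j = 0 by rewrite /z_ hhas.
have := F1 hX hperp j f'; rewrite hzj mul0r addr0 /= hfe subrr mulr0 addr0 => /eqP.
by rewrite mulf_eq0 (negbTE hzf) orbF => /eqP.
Qed.

Lemma Y_imag (X : 'M[C]_n.+1) (j l : 'I_n) : skew_herm X -> in_perp lam mu X ->
  z j != 0 -> z l != 0 -> (X (L j) (L l))^* = - X (L j) (L l).
Proof.
move=> hX hperp hzj hzl.
have [e|ne] := eqVneq j l; first by rewrite e skewE.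
have hd : mu l - mu j != 0.
  rewrite subr_eq0; apply/eqP => e; move/eqP: ne; apply.
  apply: val_inj; apply: (firsts_eq _ _ (esym e)).
  - by case/andP: (z_neq0 hzj).
  - by case/andP: (z_neq0 hzl).
have h1 := F1 hX hperp j l.
have h2 : (X (L j) ord0 * z l + z j * (X (L l) ord0)^* + X (L j) (L l) * (mu l - mu j))^* = 0.
  by rewrite h1 conjC0.
rewrite !rmorphD !rmorphM rmorphB /= !zconj !mu_conj conjCK (x_imag hX hperp hzj) in h2.
rewrite (x_imag hX hperp hzl) in h1.
have : ((X (L j) (L l))^* + X (L j) (L l)) * (mu l - mu j) = 0.
  rewrite -[RHS](addr0 0); rewrite -{1}h1 -h2; ring.
by move/eqP; rewrite mulf_eq0 (negbTE hd) orbF addr_eq0 => /eqP.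
Qed.

Lemma w_imag (X : 'M[C]_n.+1) (j : 'I_n) : skew_herm X -> in_perp lam mu X -> z j != 0 ->
  (bracket X p (L j) ord0)^* = - bracket X p (L j) ord0.
Proof.
move=> hX hperp hzj.
have es : (\sum_(l < n) X (L j) (L l) * z l)^* = - \sum_(l < n) X (L j) (L l) * z l.
  rewrite rmorph_sum -sumrN; apply: eq_bigr => l _; rewrite rmorphM /= zconj.
  have [zl0|zl] := eqVneq (z l) 0; first by rewrite zl0 !mulr0 oppr0.
  by rewrite (Y_imag hX hperp hzj zl) mulNr.
rewrite u_expr !rmorphB !rmorphD !rmorphM /= es zconj mu_conj (conj_real c_real).
rewrite (x_imag hX hperp hzj) skewE //; ring.
Qed.


Lemma tr_bX (X Y : 'M[C]_n.+1) : skew_herm X -> skew_herm Y -> in_perp lam mu Y ->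
  \tr (bracket Y p *m X) = \sum_(j < n) ((bracket Y p (L j) ord0)^* * X (L j) ord0
                                         - bracket Y p (L j) ord0 * (X (L j) ord0)^*).
Proof.
move=> hX hY hperp.
set b := bracket Y p.
have hb00 : b ord0 ord0 = 0.
  have : \tr b = 0 by rewrite /b /bracket raddfB /= mxtrace_mulC subrr.
  rewrite /mxtrace big_ord_recl big1 ?addr0 // => j _.
  by rewrite /b perp_LL.
have hb0 : forall u, b ord0 (L u) = (b (L u) ord0)^*.
  by move=> u; rewrite -adjmxE /b br_herm.
rewrite /mxtrace big_ord_recl mxE big_ord_recl hb00 mul0r add0r.
rewrite [X in _ + X = _](eq_bigr (fun t => b (L t) ord0 * X ord0 (L t))); last first.
  move=> t _; rewrite mxE big_ord_recl big1 ?addr0 // => u _.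
  by rewrite /b perp_LL ?mul0r.
rewrite -big_split /=; apply: eq_bigr => j _.
rewrite hb0 -(opprK (X ord0 (L j))) -skewE // mulrN; ring.
Qed.

Lemma regroup (F : nat -> C) (G : C -> C) (P : pred C) :
  \sum_(m <- mu_vals n mu | P m) (\sum_(j <- iota 0 n | mu j == m) F j) / G m =
  \sum_(j <- iota 0 n | P (mu j)) F j / G (mu j).
Proof.
under eq_bigr do rewrite mulr_suml big_mkcond.
rewrite exchange_big [RHS]big_mkcond; apply: eq_big_seq => j hj /=.
rewrite big_mkcond (bigD1_seq (mu j)) /=; first last.
- exact: undup_uniq.
- by rewrite /mu_vals mem_undup map_f.
rewrite eqxx big1 ?addr0; first by case: (P (mu j)).
move=> m hm; case: (P m) => //; by rewrite eq_sym (negbTE hm).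
Qed.

Lemma CP_real m : m \is Num.real -> C_ n lam mu m \is Num.real.
Proof.
move=> hm; rewrite /C_; apply: rpredD; first by apply: rpredB => //; exact: c_real.
apply: rpred_sum => t ht; rewrite rpredM ?rpredV ?rpredX ?r_real ?rpredB //.
by apply: Vals_real; case/andP: (M_in ht).
Qed.


Lemma main (X Y : 'M[C]_n.+1) (hX : skew_herm X) (hY : skew_herm Y)
  (hXperp : in_perp lam mu X) (hYperp : in_perp lam mu Y) :
  omegaL p X Y = omegaLM n lam mu (Psi lam mu (bracket X p)) (Psi lam mu (bracket Y p)).
Proof.
rewrite /omegaL /omegaLM -opprB mulmxN raddfN /= tr_perp opprK (tr_bX hX hY hYperp).
rewrite regroup (_ : iota 0 n = index_iota 0 n); last by rewrite /index_iota subn0.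
rewrite big_mkord; congr (_ * _).
rewrite [RHS]big_mkcond; apply: eq_bigr => j _ /=.
have hPsi : forall (A : 'M[C]_n.+1), isP (mu j) -> Psi lam mu A j = A (L j) ord0.
  move=> A h; rewrite /Psi h; congr (A _ _); apply: val_inj.
  by rewrite /= inordK ?lift0 // ltnS ltn_ord.
case hM: (isM (mu j)).
  have hP : isP (mu j) = false by apply/negbTE/negP => h; exact: MP_excl hM h.
  rewrite hP.
  case hh: (has (fun j' => mu j' == mu j) (iota 0 j)).
    by rewrite (x_zero hX hXperp hM hh) conjC0 !mulr0 subrr.
  have hz := z_first hM (negbT hh).
  rewrite (x_imag hX hXperp hz) (w_imag hY hYperp hz); ring.
have hnM : ~~ isM (mu j) by rewrite hM.
set Cm := C_ n lam mu (mu j).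
have hCr : Cm^* = Cm by apply/conj_real/CP_real/hmu_real.
case hP: (isP (mu j)).
  rewrite !hPsi // (uC hX hXperp hnM) (uC hY hYperp hnM) -/Cm !rmorphM /= hCr.
  have [C0|Cn0] := eqVneq Cm 0.
    by rewrite C0 invr0 mulr0 !mul0r subrr.
  by field.
have hW : isW (mu j).
  case/or3P: (shape3 (mu j)) => //.
  - by rewrite -/(is_par n lam mu (mu j)) hP.
  - by rewrite -/(is_M n lam mu (mu j)) hM.
rewrite (uC hY hYperp hnM) -/Cm /Cm CW_zero // !mul0r conjC0 mul0r subrr.
by [].
Qed.

End Comb.

Unset Implicit Arguments.

Theorem proposition4p7 (C : numClosedFieldType) (n : nat) (lam mu : nat -> C)
  (hn : (1 <= n)%N)
  (hlam_real : forall i, (i <= n)%N -> lam i \is Num.real)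
  (hmu_real : forall i, (i < n)%N -> mu i \is Num.real)
  (hinterlace : forall i, (i < n)%N -> lam i.+1 <= mu i <= lam i)
  (X Y : 'M[C]_(n.+1)) (hX : skew_herm X) (hY : skew_herm Y)
  (hXperp : in_perp lam mu X) (hYperp : in_perp lam mu Y) :
  omegaL (ptilde n lam mu) X Y =
  omegaLM n lam mu (Psi lam mu (bracket X (ptilde n lam mu)))
                 (Psi lam mu (bracket Y (ptilde n lam mu))).
Proof. by apply: main. Qed.
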